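(* Suppose that (i) there is a net $\{\varphi_\alpha\}$ in $MA(G,\sigma)$ converging pointwise to $1$ with $\|M_{\varphi_\alpha}\|=1$ for all $\alpha$, and (ii) for each $\alpha$ there is a function $\kappa_\alpha:G\to[1,\infty)$ such that $G$ is $\kappa_\alpha$-decaying and $\varphi_\alpha\kappa_\alpha\in c_0(G)$. Then $(G,\sigma)$ has the metric Fejér property.
   Context: $G$ is a discrete group, $\sigma:G\times G\to\mathbb{T}$ a normalized 2-cocycle ($\sigma(g,h)\sigma(gh,k)=\sigma(h,k)\sigma(g,hk)$, $\sigma(g,e)=\sigma(e,g)=1$); $\Lambda_\sigma(g)$ is the unitary on $\ell^2(G)$ with $(\Lambda_\sigma(g)\xi)(h)=\sigma(g,g^{-1}h)\xi(g^{-1}h)$, $\lambda=\Lambda_1$; $C^*_r(G,\sigma)$ is the operator-norm closure of $\mathrm{span}\,\Lambda_\sigma(G)$. For $\varphi:G\to\mathbb{C}$, $M_\varphi$ is the linear map with $M_\varphi(\Lambda_\sigma(g))=\varphi(g)\Lambda_\sigma(g)$; $\varphi\in MA(G,\sigma)$ if $M_\varphi$ is bounded, then extended to $C^*_r(G,\sigma)$. $\mathcal{K}(G)$ = finitely supported functions, $\pi_\lambda(f)=\sum_g f(g)\lambda(g)$; for $\kappa:G\to[1,\infty)$, $\|\xi\|_{2,\kappa}=\|\xi\kappa\|_2$ and $G$ is $\kappa$-decaying if $f\mapsto\pi_\lambda(f)$ is bounded from $(\mathcal{K}(G),\|\cdot\|_{2,\kappa})$ to $C^*_r(G,1)$. $c_0(G)$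 is the space of functions vanishing at infinity. $(G,\sigma)$ has the metric Fejér property if there is a net $\{\varphi_\beta\}$ in $\mathcal{K}(G)$ converging pointwise to $1$ with $\|M_{\varphi_\beta}\|=1$ for all $\beta$ (such a net then satisfies $M_{\varphi_\beta}(x)\to x$ in norm for all $x\in C^*_r(G,\sigma)$). *)

(* Defs.v *)
From mathcomp Require Import all_boot all_order all_algebra.
From mathcomp Require Import monoid.
From mathcomp Require Import all_classical all_reals all_analysis.
From mathcomp Require Import complex.
Set Implicit Arguments. Unset Strict Implicit. Unset Printing Implicit Defensive.
Import Order.TTheory GRing.Theory Num.Theory.
Local Open Scope classical_set_scope.
Local Open Scope ring_scope.

Section Defs.
Variables (R : realType) (G : groupType).
Local Notation C := (R[i]).

Definition cnorm (z : C) : R := ComplexField.Normc.normc z.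

Definition finsupp (f : G -> C) : Prop := finite_set [set g | f g != 0].

Definition two_cocycle (s : G -> G -> C) : Prop :=
  (forall g h, cnorm (s g h) = 1) /\
  (forall g h k, s g h * s (g * h)%g k = s h k * s g (h * k)%g) /\
  (forall g, s g 1%g = 1 /\ s 1%g g = 1).

Definition triv_cocycle : G -> G -> C := fun _ _ => 1.

(* l^2(G) norm (in the extended reals; +oo if xi is not in l^2(G)) *)
Definition l2norm (xi : G -> C) : \bar R :=
  sqrte (\esum_(g in [set: G]) ((cnorm (xi g)) ^+ 2)%:E).

(* (sum_g c(g) Lambda_s(g)) xi, for c finitely supported:
   (Lambda_s(g) xi)(h) = s(g, g^-1 h) xi(g^-1 h) *)
Definition twisted_apply (s : G -> G -> C) (c xi : G -> C) : G -> C :=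
  fun h => \sum_(g \in [set: G]) (c g * s g (g^-1 * h)%g * xi (g^-1 * h)%g).

Definition opnorm (s : G -> G -> C) (c : G -> C) : \bar R :=
  ereal_sup [set l2norm (twisted_apply s c xi) | xi in [set xi | (l2norm xi <= 1)%E]].

(* phi in MA(G,s): M_phi bounded on span Lambda_s(G) for the C*_r-norm *)
Definition in_MA (s : G -> G -> C) (phi : G -> C) : Prop :=
  exists M : R, forall c : G -> C, finsupp c ->
    (opnorm s (fun g => (phi g * c g)%R) <= M%:E * opnorm s c)%E.

(* ||M_phi|| : norm of the multiplier on span Lambda_s(G) (dense in C*_r(G,s)) *)
Definition mult_norm (s : G -> G -> C) (phi : G -> C) : \bar R :=
  ereal_sup [set opnorm s (fun g => (phi g * c g)%R) |
             c in [set c | finsupp c /\ (opnorm s c <= 1)%E]].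

(* G is kappa-decaying: f |-> pi_lambda(f) bounded from (K(G), ||.||_{2,kappa})
   to C*_r(G,1) *)
Definition kappa_decaying (kappa : G -> R) : Prop :=
  exists M : R, forall f : G -> C, finsupp f ->
    (opnorm triv_cocycle f <= M%:E * l2norm (fun g => (f g * ((kappa g)%:C)%C)%R))%E.

Definition c0 (f : G -> C) : Prop :=
  forall eps : R, 0 < eps -> finite_set [set g | eps <= cnorm (f g)].

Definition pw_conv_to_one (I : Type) (le : I -> I -> Prop) (phi : I -> G -> C)
  : Prop :=
  forall (g : G) (eps : R), 0 < eps ->
    exists i0 : I, forall i, le i0 i -> cnorm (phi i g - 1) < eps.

Definition metric_fejer (s : G -> G -> C) : Prop :=
  exists (I : Type) (le : I -> I -> Prop),
    (inhabited I /\ (forall i, le i i) /\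
     (forall i j k, le i j -> le j k -> le i k) /\
     (forall i j, exists k, le i k /\ le j k)) /\
    exists phi : I -> G -> C,
      (forall i, finsupp (phi i)) /\ pw_conv_to_one le phi /\
      (forall i, mult_norm s (phi i) = 1%E).

End Defs.

Definition directed (I : Type) (le : I -> I -> Prop) : Prop :=
  inhabited I /\ (forall i, le i i) /\
  (forall i j k, le i j -> le j k -> le i k) /\
  (forall i j, exists k, le i k /\ le j k).

(* Main.v *)
Require Import Defs.
From mathcomp Require Import all_boot all_order all_algebra.
From mathcomp Require Import monoid.
From mathcomp Require Import all_classical all_reals all_analysis.
From mathcomp Require Import complex.
Import Order.TTheory GRing.Theory Num.Theory.
Local Open Scope classical_set_scope.
Local Open Scope ring_scope.
From mathcomp Require Import ring lra.
Set Implicit Arguments. Unset Strict Implicit. Unset Printing Implicit Defensive.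

Section CN.
Variable R : realType.
Local Notation C := R[i].

Lemma cnormE (z : C) : ((cnorm z)%:C)%C = `|z|.
Proof. by rewrite normc_def; case: z. Qed.

Lemma cnorm_ge0 (z : C) : 0 <= cnorm z.
Proof. rewrite -(@lecR R) cnormE; exact: normr_ge0. Qed.

Lemma cnormM (x y : C) : cnorm (x * y) = cnorm x * cnorm y.
Proof. exact: ComplexField.Normc.normcM. Qed.

Lemma cnormD (x y : C) : cnorm (x + y) <= cnorm x + cnorm y.
Proof. by rewrite -(@lecR R) rmorphD /= !cnormE ler_normD. Qed.

Lemma cnormN (x : C) : cnorm (- x) = cnorm x.
Proof. by apply: (@complexI R); rewrite !cnormE normrN. Qed.

Lemma cnormB (x y : C) : cnorm (x - y) = cnorm (y - x).
Proof. by rewrite -cnormN opprB. Qed.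

Lemma cnormR (r : R) : cnorm ((r%:C)%C) = `|r|.
Proof. by apply: (@complexI R); rewrite cnormE normc_def /= expr0n /= addr0 sqrtr_sqr. Qed.

Lemma cnorm0 : cnorm (0 : C) = 0.
Proof. exact: ComplexField.Normc.normc0. Qed.

Lemma cnorm1 : cnorm (1 : C) = 1.
Proof. exact: ComplexField.Normc.normc1. Qed.

Lemma cnorm_eq0 (z : C) : (cnorm z == 0) = (z == 0).
Proof.
apply/eqP/eqP; last by move=> ->; exact: cnorm0.
by move=> /(congr1 (fun r => (r%:C)%C)); rewrite cnormE /= => /eqP; rewrite normr_eq0 => /eqP.
Qed.

Lemma cnorm_sum (T : Type) (s : seq T) (F : T -> C) :
  cnorm (\sum_(x <- s) F x) <= \sum_(x <- s) cnorm (F x).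
Proof.
elim: s => [|a s IH]; first by rewrite !big_nil cnorm0.
rewrite !big_cons; apply: le_trans (cnormD _ _) _; exact: lerD.
Qed.

Lemma sum_realC (T : Type) (s : seq T) (F : T -> R) :
  \sum_(x <- s) ((F x)%:C)%C = ((\sum_(x <- s) F x)%:C)%C.
Proof. by rewrite rmorph_sum. Qed.

Lemma cauchy_schwarz (T : eqType) (s : seq T) (a b : T -> R) :
  (forall x, 0 <= a x) -> (forall x, 0 <= b x) ->
  \sum_(x <- s) a x * b x <=
  Num.sqrt (\sum_(x <- s) a x ^+ 2) * Num.sqrt (\sum_(x <- s) b x ^+ 2).
Proof.
move=> a0 b0.
set A := Num.sqrt _; set B := Num.sqrt _.
have A0 : 0 <= A by exact: sqrtr_ge0.
have B0 : 0 <= B by exact: sqrtr_ge0.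
have SA : \sum_(x <- s) a x ^+ 2 = A ^+ 2 by rewrite sqr_sqrtr // sumr_ge0 // => i _; exact: sqr_ge0.
have SB : \sum_(x <- s) b x ^+ 2 = B ^+ 2 by rewrite sqr_sqrtr // sumr_ge0 // => i _; exact: sqr_ge0.
have key : 2 * A * B * (\sum_(x <- s) a x * b x) <= 2 * (A * B) ^+ 2.
  have : \sum_(x <- s) 2 * A * B * (a x * b x) <=
         \sum_(x <- s) (a x ^+ 2 * B ^+ 2 + b x ^+ 2 * A ^+ 2).
    apply: ler_sum => x _.
    have := sqr_ge0 (a x * B - b x * A); nra.
  rewrite -mulr_sumr big_split /= -!mulr_suml SA SB => H.
  apply: le_trans H _; nra.
have [AB0|ABp] := eqVneq (A * B) 0.
  move/eqP: AB0; rewrite mulf_eq0 => /orP[/eqP A00|/eqP B00].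
  - have : \sum_(x <- s) a x ^+ 2 == 0 by rewrite SA A00 expr0n.
    rewrite (@psumr_eq0 _ _ s xpredT); last by move=> i _; exact: sqr_ge0.
    move=> /allP H; rewrite A00 mul0r big_seq big1 // => x xs.
    by have := H x xs; rewrite /= sqrf_eq0 => /eqP ->; rewrite mul0r.
  - have : \sum_(x <- s) b x ^+ 2 == 0 by rewrite SB B00 expr0n.
    rewrite (@psumr_eq0 _ _ s xpredT); last by move=> i _; exact: sqr_ge0.
    move=> /allP H; rewrite B00 mulr0 big_seq big1 // => x xs.
    by have := H x xs; rewrite /= sqrf_eq0 => /eqP ->; rewrite mulr0.
have ABp' : 0 < A * B by rewrite lt_def ABp mulr_ge0.
nra.
Qed.

Lemma minkowski (T : eqType) (s : seq T) (a b : T -> R) :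
  (forall x, 0 <= a x) -> (forall x, 0 <= b x) ->
  Num.sqrt (\sum_(x <- s) (a x + b x) ^+ 2) <=
  Num.sqrt (\sum_(x <- s) a x ^+ 2) + Num.sqrt (\sum_(x <- s) b x ^+ 2).
Proof.
move=> a0 b0.
have CS := @cauchy_schwarz T s a b a0 b0.
set A := Num.sqrt _ in CS *; set B := Num.sqrt _ in CS *.
have A0 : 0 <= A by exact: sqrtr_ge0.
have B0 : 0 <= B by exact: sqrtr_ge0.
have SA : \sum_(x <- s) a x ^+ 2 = A ^+ 2 by rewrite sqr_sqrtr // sumr_ge0 // => i _; exact: sqr_ge0.
have SB : \sum_(x <- s) b x ^+ 2 = B ^+ 2 by rewrite sqr_sqrtr // sumr_ge0 // => i _; exact: sqr_ge0.
rewrite -(ger0_norm (addr_ge0 A0 B0)) -sqrtr_sqr ler_sqrt ?sqr_ge0 //.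
have -> : \sum_(x <- s) (a x + b x) ^+ 2 =
   \sum_(x <- s) a x ^+ 2 + 2 * \sum_(x <- s) a x * b x + \sum_(x <- s) b x ^+ 2.
  rewrite mulr_sumr -!big_split /=; apply: eq_bigr => x _; rewrite sqrrD; ring.
rewrite SA SB; nra.
Qed.
End CN.
Section L2.
Variables (R : realType) (G : groupType).
Local Notation C := R[i].
Implicit Types (f h : G -> C).

Lemma ler_fsumR (X : set G) (F1 F2 : G -> R) : finite_set X ->
  (forall g, F1 g <= F2 g) -> \sum_(g \in X) F1 g <= \sum_(g \in X) F2 g.
Proof. by move=> Xf H; rewrite !fsbig_finite //; apply: ler_sum => g _. Qed.

Lemma l2_ge0 f : (0 <= l2norm f)%E.
Proof. exact: sqrte_ge0. Qed.

Lemma l2_lb f (X : set G) : finite_set X ->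
  ((Num.sqrt (\sum_(g \in X) cnorm (f g) ^+ 2))%:E <= l2norm f)%E.
Proof.
move=> Xf; rewrite /l2norm -[X in (X <= _)%E]/(sqrte (\sum_(g \in X) cnorm (f g) ^+ 2)%:E).
rewrite lee_sqrt; last by apply: esum_ge0 => g _; rewrite lee_fin sqr_ge0.
apply: esum_ge; exists X; first by split.
by rewrite fsumEFin.
Qed.

Lemma l2_le f (x : \bar R) :
  (forall X : set G, finite_set X ->
     ((Num.sqrt (\sum_(g \in X) cnorm (f g) ^+ 2))%:E <= x)%E) ->
  (l2norm f <= x)%E.
Proof.
case: x => [r| |] H; last 2 first.
- exact: leey.
- by have := H set0 (finite_set0 G); rewrite fsbig_set0 sqrtr0.
have r0 : 0 <= r by have := H set0 (finite_set0 G); rewrite fsbig_set0 sqrtr0 lee_fin.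
have -> : r%:E = sqrte (r ^+ 2)%:E by rewrite /= sqrtr_sqr ger0_norm.
rewrite /l2norm lee_sqrt ?lee_fin ?sqr_ge0 //.
apply: ge_ereal_sup => y [X [Xf _] <-].
rewrite fsumEFin // lee_fin.
have := H X Xf; rewrite lee_fin -{1}(ger0_norm r0) -sqrtr_sqr ler_sqrt //.
exact: sqr_ge0.
Qed.

Lemma l2_scale f h (e : R) : 0 <= e -> (forall g, cnorm (f g) <= e * cnorm (h g)) ->
  (l2norm f <= e%:E * l2norm h)%E.
Proof.
move=> e0 H; apply: l2_le => X Xf.
have e0' : (0 <= e%:E)%E by rewrite lee_fin.
apply: le_trans (lee_wpmul2l e0' (l2_lb h Xf)).
rewrite -EFinM lee_fin -(ger0_norm e0) -sqrtr_sqr -sqrtrM ?sqr_ge0 //.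
rewrite ler_sqrt; last by rewrite mulr_ge0 ?sqr_ge0 // fsumr_ge0 // => g _; exact: sqr_ge0.
rewrite mulr_fsumr; apply: ler_fsumR => // g.
rewrite -exprMn; apply: lerXn2r; rewrite ?nnegrE ?cnorm_ge0 ?mulr_ge0 ?cnorm_ge0 //.
Qed.
End L2.
Section L2b.
Variables (R : realType) (G : groupType).
Local Notation C := R[i].
Implicit Types (f h : G -> C).

Lemma l2_tri f h : (l2norm (fun g => (f g + h g)%R) <= l2norm f + l2norm h)%E.
Proof.
apply: l2_le => X Xf.
apply: le_trans (leeD (l2_lb f Xf) (l2_lb h Xf)); rewrite -EFinD lee_fin.
apply: le_trans (_ : Num.sqrt (\sum_(g \in X) (cnorm (f g) + cnorm (h g)) ^+ 2) <= _).
  rewrite ler_sqrt; last by rewrite fsumr_ge0 // => g _; exact: sqr_ge0.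
  apply: ler_fsumR => // g; apply: lerXn2r; rewrite ?nnegrE ?addr_ge0 ?cnorm_ge0 //.
  exact: cnormD.
rewrite !fsbig_finite //; apply: minkowski => g; exact: cnorm_ge0.
Qed.

Lemma l2_ext f h : (forall g, cnorm (f g) = cnorm (h g)) -> l2norm f = l2norm h.
Proof. by move=> H; rewrite /l2norm; congr sqrte; apply: eq_esum => g _; rewrite H. Qed.

Lemma l2_0 : l2norm (fun _ : G => 0 : C) = 0%E.
Proof.
apply/eqP; rewrite eq_le l2_ge0 andbT.
apply: le_trans (l2_scale (h := fun _ : G => 0 : C) (le_refl 0) _) _.
  by move=> g; rewrite mul0r cnorm0.
by rewrite mul0e.
Qed.

Lemma fsumT_supp (F : G -> C) (P : set G) : finite_set P ->
  (forall g, ~ P g -> F g = 0) ->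
  \sum_(g \in [set: G]) F g = \sum_(g \in P) F g.
Proof.
move=> Pf H; rewrite (fsbig_widen P [set: G]) //.
by move=> g [_ nPg]; rewrite /preimage /=; exact: H.
Qed.

Definition supp (c : G -> C) := [set g | c g != 0].

Variable s : G -> G -> C.

Lemma tw_supp c xi (h : G) P : finite_set P -> supp c `<=` P ->
  twisted_apply s c xi h = \sum_(g \in P) c g * s g (g^-1 * h)%g * xi (g^-1 * h)%g.
Proof.
move=> Pf sub; rewrite /twisted_apply (fsumT_supp Pf) // => g nPg.
have : c g = 0 by apply/eqP/negPn/negP => cg; apply: nPg; exact: sub.
by move=> ->; rewrite !mul0r.
Qed.

Lemma tw_add a b xi (h : G) : finsupp a -> finsupp b ->
  twisted_apply s (fun g => a g + b g) xi h =
  twisted_apply s a xi h + twisted_apply s b xi h.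
Proof.
move=> af bf; have Pf : finite_set (supp a `|` supp b) by rewrite finite_setU.
rewrite !(tw_supp _ _ Pf) //; last first.
  move=> g /= abg; case: (boolP (a g == 0)) => [/eqP a0|an]; last by left.
  by right; move: abg; rewrite /supp /= a0 add0r.
rewrite -fsbig_split //; apply: eq_fsbigr => g _; rewrite !mulrDl //.
Qed.

Lemma tw_scale t c xi (h : G) :
  twisted_apply s (fun g => t * c g) xi h = t * twisted_apply s c xi h.
Proof. by rewrite /twisted_apply mulr_fsumr; apply: eq_fsbigr => g _; rewrite !mulrA. Qed.

End L2b.
Section Op.
Variables (R : realType) (G : groupType).
Local Notation C := R[i].
Variable s : G -> G -> C.

Lemma op_ge (c xi : G -> C) : (l2norm xi <= 1)%E ->
  (l2norm (twisted_apply s c xi) <= opnorm s c)%E.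
Proof. by move=> H; apply: ereal_sup_ubound; exists xi. Qed.

Lemma op_le (c : G -> C) (x : \bar R) :
  (forall xi, (l2norm xi <= 1)%E -> (l2norm (twisted_apply s c xi) <= x)%E) ->
  (opnorm s c <= x)%E.
Proof. by move=> H; apply: ge_ereal_sup => y [xi /= hxi <-]; exact: H. Qed.

Lemma op_ge0 (c : G -> C) : (0 <= opnorm s c)%E.
Proof.
apply: le_trans (l2_ge0 _) (op_ge c (xi := fun _ => 0) _).
by rewrite l2_0.
Qed.

Lemma op_tri (a b : G -> C) : finsupp a -> finsupp b ->
  (opnorm s (fun g => (a g + b g)%R) <= opnorm s a + opnorm s b)%E.
Proof.
move=> af bf; apply: op_le => xi hxi.
have -> : twisted_apply s (fun g => (a g + b g)%R) xi =
   (fun h => twisted_apply s a xi h + twisted_apply s b xi h)%R.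
  by apply: funext => h; rewrite tw_add.
apply: le_trans (l2_tri _ _) _.
by apply: leeD; apply: op_ge.
Qed.

Lemma l2_scaleE (t : R) (f : G -> C) : 0 < t ->
  l2norm (fun h => ((t%:C)%C * f h)%R) = (t%:E * l2norm f)%E.
Proof.
move=> t0; apply/eqP; rewrite eq_le; apply/andP; split.
  apply: l2_scale; first exact: ltW.
  by move=> g; rewrite cnormM cnormR gtr0_norm.
have H : (l2norm f <= t^-1%:E * l2norm (fun h => ((t%:C)%C * f h)%R))%E.
  apply: l2_scale; first by rewrite invr_ge0 ltW.
  by move=> g; rewrite cnormM cnormR gtr0_norm // mulrA mulVf ?gt_eqF // mul1r.
have t0' : (0 <= t%:E)%E by rewrite lee_fin ltW.
have := lee_wpmul2l t0' H; rewrite muleA -EFinM mulfV ?gt_eqF // mul1e //.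
Qed.

Lemma op_scale (t : R) (c : G -> C) : 0 < t ->
  opnorm s (fun g => ((t%:C)%C * c g)%R) = (t%:E * opnorm s c)%E.
Proof.
move=> t0; rewrite /opnorm -ereal_sup_pZl // image_comp; congr ereal_sup.
apply/seteqP; split => y /= [xi hxi <-]; exists xi => //=.
  by rewrite -l2_scaleE //; congr l2norm; apply: funext => h; rewrite tw_scale.
by rewrite -l2_scaleE //; congr l2norm; apply: funext => h; rewrite tw_scale.
Qed.

Definition delta1 : G -> C := fun g => if g == 1%g then 1 else 0.

Lemma l2_delta : (l2norm delta1 <= 1)%E.
Proof.
apply: l2_le => X Xf.
rewrite -(fsbig_widen (X `&` [set 1%g]) X); last 2 first.
- by move=> g [].
- move=> g [Xg nXg]; rewrite /preimage /= /delta1.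
  case: eqP => [g1|_]; last by rewrite cnorm0 expr0n.
  by exfalso; apply: nXg; split.
case: (pselect (X 1%g)) => X1.
  have -> : X `&` [set 1%g] = [set 1%g] by apply/seteqP; split => g /=; [by case | by move=> ->].
  by rewrite fsbig_set1 /delta1 eqxx cnorm1 expr1n sqrtr1.
have -> : X `&` [set 1%g] = set0.
  by apply/seteqP; split => g //= [Xg g1]; apply: X1; rewrite -g1.
by rewrite fsbig_set0 sqrtr0 lee_fin.
Qed.

Hypothesis hs : two_cocycle s.

Lemma tw_delta (c : G -> C) : twisted_apply s c delta1 = c.
Proof.
apply: funext => h; rewrite /twisted_apply (@fsumT_supp _ _ _ [set h]); last 2 first.
- exact: finite_set1.
- move=> g ngh; rewrite /delta1; case: eqP => [/eqP|_]; last by rewrite mulr0.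
  by rewrite mulg_eq1 => /eqP /invg_inj gh; exfalso; apply: ngh.
have [_ [_ hn]] := hs.
rewrite fsbig_set1 mulVg /delta1 eqxx mulr1 (hn h).1 mulr1 //.
Qed.

Lemma op_l2 (c : G -> C) : (l2norm c <= opnorm s c)%E.
Proof. by rewrite -{1}(tw_delta c); apply: op_ge; exact: l2_delta. Qed.

End Op.
Section Dom.
Variables (R : realType) (G : groupType).
Local Notation C := R[i].
Variable s : G -> G -> C.

Lemma supp_sub (a b : G -> C) : (forall g, a g = 0 -> b g = 0) ->
  finsupp a -> finsupp b.
Proof.
move=> H af; apply: sub_finite_set af => g /= bg; apply/negP => /eqP ag.
by move: bg; rewrite (H g ag) eqxx.
Qed.

Lemma op_dom (hs1 : forall g h, cnorm (s g h) = 1) (a : G -> C) : finsupp a ->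
  (opnorm s a <= opnorm (@triv_cocycle R G) (fun g => ((cnorm (a g))%:C)%C))%E.
Proof.
move=> af; apply: op_le => xi hxi.
set A := fun g => ((cnorm (a g))%:C)%C; set X := fun g => ((cnorm (xi g))%:C)%C.
have hX : (l2norm X <= 1)%E.
  by rewrite (@l2_ext _ _ X xi) // => g; rewrite /X cnormR ger0_norm // cnorm_ge0.
apply: le_trans (op_ge _ _ hX).
rewrite -[X in (_ <= X)%E]mul1e; apply: l2_scale => // h; rewrite mul1r.
have subA : supp A `<=` supp a.
  by move=> g /=; apply: contra_neq; rewrite /A => ->; rewrite cnorm0.
rewrite (tw_supp _ _ _ af (@subset_refl _ _)) (tw_supp _ _ _ af subA) !fsbig_finite //.
apply: le_trans (cnorm_sum _ _) _.
rewrite (eq_bigr (fun g => ((cnorm (a g) * cnorm (xi (g^-1 * h)%g))%:C)%C)); last first.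
  by move=> g _; rewrite /A /X /triv_cocycle mulr1 rmorphM.
rewrite sum_realC cnormR ger0_norm; last by apply: sumr_ge0 => g _; rewrite mulr_ge0 ?cnorm_ge0.
apply: ler_sum => g _; rewrite !cnormM hs1 mulr1 //.
Qed.

Lemma tail (hs1 : forall g h, cnorm (s g h) = 1)
  (hl2 : forall c : G -> C, (l2norm c <= opnorm s c)%E)
  (kappa : G -> R) (hk : forall g, 1 <= kappa g) (M : R)
  (hM : forall f : G -> C, finsupp f ->
     (opnorm (@triv_cocycle R G) f <= M%:E * l2norm (fun g => (f g * ((kappa g)%:C)%C)%R))%E)
  (d c : G -> C) (e : R) (e0 : 0 <= e)
  (hd : forall g, cnorm (d g) * kappa g <= e)
  (cf : finsupp c) (c1 : (opnorm s c <= 1)%E) :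
  (opnorm s (fun g => (d g * c g)%R) <= (Num.max M 0 * e)%:E)%E.
Proof.
set f := fun g => ((cnorm (d g * c g))%:C)%C.
have dcf : finsupp (fun g => (d g * c g)%R).
  by apply: supp_sub cf => g ->; rewrite mulr0.
have ff : finsupp f by apply: supp_sub cf => g; rewrite /f => ->; rewrite mulr0 cnorm0.
apply: le_trans (op_dom hs1 dcf) _.
apply: le_trans (hM f ff) _.
have L0 : (0 <= l2norm (fun g => (f g * ((kappa g)%:C)%C)%R))%E by exact: l2_ge0.
have L1 : (l2norm (fun g => (f g * ((kappa g)%:C)%C)%R) <= e%:E)%E.
  have e0' : (0 <= e%:E)%E by rewrite lee_fin.
  have H1 : (l2norm (fun g => (f g * ((kappa g)%:C)%C)%R) <= e%:E * l2norm c)%E.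
    apply: l2_scale => //.
    move=> g; rewrite /f !cnormM !cnormR !ger0_norm ?cnorm_ge0 ?mulr_ge0 ?cnorm_ge0 //; last first.
      by apply: le_trans _ (hk g).
    rewrite mulrAC; apply: ler_wpM2r; first exact: cnorm_ge0.
    exact: hd.
  apply: le_trans H1 _.
  rewrite -[X in (_ <= X)%E]mule1; apply: lee_wpmul2l => //.
  exact: le_trans (hl2 c) c1.
apply: le_trans (_ : ((Num.max M 0)%:E * l2norm (fun g => (f g * ((kappa g)%:C)%C)%R) <= _)%E).
  by apply: lee_wpmul2r => //; rewrite lee_fin le_max lexx.
rewrite EFinM; apply: lee_wpmul2l => //; rewrite lee_fin le_max lexx orbT //.
Qed.
End Dom.
Section Trunc.
Variables (R : realType) (G : groupType).
Local Notation C := R[i].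
Variable s : G -> G -> C.

Lemma mn_le (psi : G -> C) (x : \bar R) :
  (forall c, finsupp c -> (opnorm s c <= 1)%E ->
     (opnorm s (fun g => (psi g * c g)%R) <= x)%E) ->
  (mult_norm s psi <= x)%E.
Proof. by move=> H; apply: ge_ereal_sup => y [c [cf c1] <-]; exact: H. Qed.

Lemma mn_ge (psi c : G -> C) : finsupp c -> (opnorm s c <= 1)%E ->
  (opnorm s (fun g => (psi g * c g)%R) <= mult_norm s psi)%E.
Proof. by move=> cf c1; apply: ereal_sup_ubound; exists c. Qed.

Lemma finsupp0 : finsupp (fun _ : G => 0 : C).
Proof. by apply: sub_finite_set (finite_set0 G) => g /=; rewrite eqxx. Qed.

Lemma op_0 : opnorm s (fun _ : G => 0 : C) = 0%E.
Proof.
apply/eqP; rewrite eq_le op_ge0 andbT; apply: op_le => xi _.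
have -> : twisted_apply s (fun _ => 0) xi = (fun _ => 0).
  by apply: funext => h; rewrite /twisted_apply fsbig1 // => g _; rewrite !mul0r.
by rewrite l2_0.
Qed.

Lemma mn_ge0 (psi : G -> C) : (0 <= mult_norm s psi)%E.
Proof.
have h0 : (opnorm s (fun _ : G => 0%R : C) <= 1)%E by rewrite op_0.
exact: le_trans (op_ge0 s _) (mn_ge psi finsupp0 h0).
Qed.

Hypothesis hs : two_cocycle s.

Lemma trunc (phi : G -> C) (kappa : G -> R) (hk : forall g, 1 <= kappa g) (M : R)
  (hM : forall f : G -> C, finsupp f ->
     (opnorm (@triv_cocycle R G) f <= M%:E * l2norm (fun g => (f g * ((kappa g)%:C)%C)%R))%E)
  (hn : mult_norm s phi = 1%E) (eps : R) (eps0 : 0 < eps)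
  (hF : finite_set [set g | eps <= cnorm (phi g * ((kappa g)%:C)%C)]) :
  let psi := fun g => if eps <= cnorm (phi g * ((kappa g)%:C)%C) then phi g else 0 in
  finsupp psi /\
  exists m : R, mult_norm s psi = m%:E /\ `|m - 1| <= Num.max M 0 * eps.
Proof.
move=> psi.
have hs1 : forall g h, cnorm (s g h) = 1 by case: hs.
have hl2 := op_l2 hs.
have psif : finsupp psi.
  apply: sub_finite_set hF => g /=; rewrite /psi; case: ifP => // _.
  by rewrite eqxx.
split => //.
set del := Num.max M 0 * eps.
set d := fun g => (psi g - phi g)%R.
have hd : forall g, cnorm (d g) * kappa g <= eps.
  move=> g; rewrite /d /psi; case: ifP => [_|/negbT nF].
    by rewrite subrr cnorm0 mul0r ltW.
  rewrite sub0r cnormN -(ger0_norm (le_trans ler01 (hk g))) -cnormR -cnormM.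
  by move: nF; rewrite -ltNge => /ltW.
have hd' : forall g, cnorm ((- d g)%R) * kappa g <= eps by move=> g; rewrite cnormN.
have key1 : forall c, finsupp c -> (opnorm s c <= 1)%E ->
    (opnorm s (fun g => (psi g * c g)%R) <= 1 + del%:E)%E.
  move=> c cf c1.
  have -> : (fun g => (psi g * c g)%R) = (fun g => (phi g * c g + d g * c g)%R).
    by apply: funext => g; rewrite -mulrDl /d addrC subrK.
  apply: le_trans (op_tri _ _ _) _.
  - by apply: supp_sub cf => g ->; rewrite mulr0.
  - by apply: supp_sub cf => g ->; rewrite mulr0.
  apply: leeD; first by rewrite -hn; exact: mn_ge.
  exact: (tail hs1 hl2 hk hM (ltW eps0) hd cf c1).
have key2 : forall c, finsupp c -> (opnorm s c <= 1)%E ->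
    (opnorm s (fun g => (phi g * c g)%R) <= mult_norm s psi + del%:E)%E.
  move=> c cf c1.
  have -> : (fun g => (phi g * c g)%R) = (fun g => (psi g * c g + (- d g) * c g)%R).
    by apply: funext => g; rewrite -mulrDl /d opprB addrC subrK.
  apply: le_trans (op_tri _ _ _) _.
  - by apply: supp_sub cf => g ->; rewrite mulr0.
  - by apply: supp_sub cf => g ->; rewrite mulr0.
  apply: leeD; first exact: mn_ge.
  exact: (tail hs1 hl2 hk hM (ltW eps0) hd' cf c1).
have up : (mult_norm s psi <= 1 + del%:E)%E by apply: mn_le.
have low : (1 <= mult_norm s psi + del%:E)%E by rewrite -hn; apply: mn_le.
have ge0 := mn_ge0 psi.
move: up low ge0; case: (mult_norm s psi) => [r| |] //= up low _.
exists r; split => //.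
move: up low; rewrite -EFinD !lee_fin => up low.
by rewrite ler_norml; apply/andP; split; lra.
Qed.

Lemma normalize (psi : G -> C) (m : R) : 0 < m -> mult_norm s psi = m%:E ->
  mult_norm s (fun g => ((m^-1%:C)%C * psi g)%R) = 1%E.
Proof.
move=> m0 hm.
have mi0 : 0 < m^-1 by rewrite invr_gt0.
rewrite /mult_norm.
have -> : [set opnorm s (fun g => ((m^-1%:C)%C * psi g * c g)%R) |
             c in [set c | finsupp c /\ (opnorm s c <= 1)%E]] =
          [set (m^-1%:E * x)%E | x in [set opnorm s (fun g => (psi g * c g)%R) |
             c in [set c | finsupp c /\ (opnorm s c <= 1)%E]]].
  rewrite image_comp; apply/seteqP; split => y /= [c hc <-]; exists c => //=.
    by rewrite -op_scale //; congr opnorm; apply: funext => g; rewrite mulrA.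
  by rewrite -op_scale //; congr opnorm; apply: funext => g; rewrite mulrA.
rewrite ereal_sup_pZl //; rewrite /mult_norm in hm; rewrite hm -EFinM mulVf ?gt_eqF //.
Qed.
End Trunc.
Section Arith.
Variable R : realType.

Lemma aux_del (a b : R) : 0 <= a -> 0 <= b -> a * (b / (a + 1)) <= b.
Proof.
move=> a0 b0; have a1 : 0 < a + 1 by rewrite ltr_wpDl.
rewrite mulrA ler_pdivrMr //; nra.
Qed.

Lemma aux_inv (n m : nat) : (m <= n)%N -> ((n.+2)%:R : R)^-1 <= ((m.+2)%:R)^-1.
Proof.
move=> mn; by rewrite lef_pV2 ?posrE ?ltr0n // ler_nat ltnS ltnS.
Qed.

Lemma aux_eps (a : R) (n : nat) : 0 <= a -> 0 < ((n.+2)%:R : R)^-1 / (a + 1).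
Proof. by move=> a0; rewrite divr_gt0 ?invr_gt0 ?ltr0n // ltr_wpDl. Qed.

Lemma aux_half (a : R) (n : nat) : 0 <= a -> ((n.+2)%:R : R)^-1 / (a + 1) <= 2^-1.
Proof.
move=> a0; have a1 : 0 < a + 1 by rewrite ltr_wpDl.
rewrite ler_pdivrMr //.
apply: le_trans (aux_inv (leq0n n)) _.
rewrite -[X in X <= _]mulr1; apply: ler_wpM2l; first by rewrite invr_ge0.
by rewrite lerDr.
Qed.

Lemma aux_n0 (e : R) : 0 < e -> exists n0 : nat, ((n0.+2)%:R : R)^-1 < e / 4.
Proof.
move=> e0; have e4 : 0 < e / 4 by rewrite divr_gt0.
have ie : 0 <= (e / 4)^-1 by rewrite invr_ge0 ltW.
have := archi_boundP ie; set k := Num.Def.archi_bound _ => hk.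
exists k; rewrite -[X in _ < X]invrK ltf_pV2 ?posrE ?ltr0n ?invr_gt0 //.
apply: lt_le_trans hk _; rewrite ler_nat; exact: leqW (leqW (leqnn k)).
Qed.
End Arith.
Unset Implicit Arguments.

Theorem theorem5p14 (R : realType) (G : groupType) (s : G -> G -> R[i])
  (hs : two_cocycle s)
  (I : Type) (le : I -> I -> Prop) (hI : directed le)
  (phi : I -> G -> R[i]) (kappa : I -> G -> R)
  (hMA : forall i, in_MA s (phi i))
  (hconv : pw_conv_to_one le phi)
  (hnorm : forall i, mult_norm s (phi i) = 1%E)
  (hk1 : forall i g, 1 <= kappa i g)
  (hdec : forall i, kappa_decaying (kappa i))
  (hc0 : forall i, c0 (fun g => phi i g * ((kappa i g)%:C)%C)) :
  metric_fejer s.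
Proof.
case: hI => [[i00] [hrefl [htrans hdir]]].
pose Mof i := sval (cid (hdec i)).
have hM i := svalP (cid (hdec i)).
pose Mi i := Num.max (Mof i) 0.
have Mi0 i : 0 <= Mi i by rewrite le_max lexx orbT.
pose eps i n := ((n.+2)%:R : R)^-1 / (Mi i + 1).
have eps0 i n : 0 < eps i n := aux_eps n (Mi0 i).
pose psi i n := fun g => if eps i n <= cnorm (phi i g * ((kappa i g)%:C)%C) then phi i g else 0.
have tr : forall i n, finsupp (psi i n) /\ exists m : R, mult_norm s (psi i n) = m%:E /\
    `|m - 1| <= Num.max (Mof i) 0 * eps i n.
  move=> i n; exact: (trunc hs (hk1 i) (hM i) (hnorm i) (eps0 i n) (hc0 i _ (eps0 i n))).
pose m i n := sval (cid (tr i n).2).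
have hm i n : mult_norm s (psi i n) = (m i n)%:E /\ `|m i n - 1| <= Num.max (Mof i) 0 * eps i n.
  exact: svalP (cid (tr i n).2).
have hdel i n : `|m i n - 1| <= ((n.+2)%:R)^-1.
  apply: le_trans (hm i n).2 _; apply: aux_del => //; exact: Mi0 i.
have m2 i n : 2^-1 <= m i n.
  have := hdel i n; have := @aux_inv R n 0 (leq0n n); rewrite ler_norml => h1 /andP[h2 h3].
  set x := ((n.+2)%:R : R)^-1 in h1 h2 h3 *; lra.
have m0 i n : 0 < m i n by apply: lt_le_trans (m2 i n); rewrite invr_gt0.
exists (I * nat)%type, (fun x y => le x.1 y.1 /\ (x.2 <= y.2)%N).
split.
  split; first by constructor; exact: (i00, 0%N).
  split; first by move=> x; split => //.
  split; first by move=> x y z [h1 h2] [h3 h4]; split; [exact: htrans h3|exact: leq_trans h4].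
  move=> [i n] [j k]; have [l [hl1 hl2]] := hdir i j.
  by exists (l, maxn n k) => /=; rewrite leq_maxl leq_maxr.
exists (fun x g => (((m x.1 x.2)^-1%:C)%C * psi x.1 x.2 g)%R).
split; [|split].
- move=> [i n]; apply: supp_sub (tr i n).1 => g /= ->; rewrite mulr0 //.
- move=> g e e0.
  pose e' := Num.min (e / 4) 2^-1.
  have e'0 : 0 < e'.
    by rewrite /e' lt_min divr_gt0 // invr_gt0 // ltr0n.
  have e'1 : e' <= e / 4 by rewrite /e' ge_min lexx.
  have e'2 : e' <= 2^-1 by rewrite /e' ge_min lexx orbT.
  have [i0 hi0] := hconv g e' e'0.
  have [n0 hn0] := aux_n0 e0.
  exists (i0, n0) => -[i n] /= [hi hn].
  have h1 := hi0 i hi.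
  have hphi : 1 - e' <= cnorm (phi i g).
    have := cnormD (1 - phi i g) (phi i g); rewrite subrK cnorm1 cnormB.
    move=> h; lra.
  have inF : eps i n <= cnorm (phi i g * ((kappa i g)%:C)%C).
    rewrite cnormM cnormR ger0_norm; last by apply: le_trans (hk1 i g).
    apply: le_trans (aux_half n (Mi0 i)) _.
    have := hk1 i g; have := cnorm_ge0 (phi i g); nra.
  rewrite /= /psi inF.
  have -> : ((m i n)^-1%:C)%C * phi i g - 1 = ((m i n)^-1%:C)%C * (phi i g - ((m i n)%:C)%C).
    by rewrite mulrBr -rmorphM mulVf ?gt_eqF.
  rewrite cnormM cnormR ger0_norm; last by rewrite invr_ge0 ltW.
  have h2 : cnorm (phi i g - ((m i n)%:C)%C) <= cnorm (phi i g - 1) + `|m i n - 1|.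
    have -> : phi i g - ((m i n)%:C)%C = (phi i g - 1) + ((1 - m i n)%:C)%C.
      by rewrite rmorphB rmorph1 addrA subrK.
    apply: le_trans (cnormD _ _) _; rewrite cnormR distrC //.
  have h3 := hdel i n.
  have h4 := @aux_inv R n n0 hn.
  have h5 := m2 i n.
  have h6 : (m i n)^-1 * m i n = 1 by rewrite mulVf ?gt_eqF.
  have h7 : 0 < (m i n)^-1 by rewrite invr_gt0.
  have h8 := cnorm_ge0 (phi i g - ((m i n)%:C)%C).
  have h9 : (m i n)^-1 <= 2 by nra.
  set x := ((n.+2)%:R : R)^-1 in h3 h4 *.
  set y := ((n0.+2)%:R : R)^-1 in h4 hn0 *.
  nra.
- move=> [i n]; exact: normalize (m0 i n) (hm i n).1.
Qed.
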